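(* The algorithm BudgetFPT described in the context, run on an instance with budget $b$, $s$ entry nodes, maximum attack path length $l$ and $n$ nodes, has running time \[O\left(l^b \binom{b+s-1}{b} n\right).\]
   Context: An instance consists of a directed graph $G=(V,E)$ with $n=|V|$ nodes, a destination node $\mathrm{DA}$, $s$ entry nodes (uniformly likely), a set of blockable edges $E_b\subseteq E$, and a budget $b$. For a set $B\subseteq E_b$ of blocked edges, $|SP(s_i,G-B)|$ is the number of edges of a shortest path from entry node $s_i$ to $\mathrm{DA}$ in $G-B$ ($+\infty$ if none), and $f$ is a fixed decreasing function with $f(+\infty)=0$; the goal is to minimize $\frac1s\sum_i f(|SP(s_i,G-B)|)$ over $B\subseteq E_b$, $|B|\le b$. The maximum attack path length $l$ is the maximum number of edges of a path to $\mathrm{DA}$ in $G$. As a standing assumption, graphs are tree-like with $m=|E|=O(n)$. Algorithm BudgetFPT$(G,b)$: if $b=0$, compute by breadth-first search from $\mathrm{DA}$ the distances of all remaining entry nodes to $\mathrm{DA}$ and return $\sum_i f(\mathrm{dist}(s_i))/s$; if no entry nodes remain, return $0$. Otherwise pick an arbitrary remaining entry node $s_1$ and an arbitrary shortest path $p$ from $s_1$ to $\mathrm{DA}$. Record the value BudgetFPT$(G',b)+f(\mathrm{dist}(s_1))/s$, where $G'$ is $G$ with $s_1$ no longer treated as an entry node; and for every blockable edge $e$ on $p$, record BudgetFPT$(G-e,b-1)$. Return the minimum recorded value. *)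

(* Defs.v *)
From HB Require Import structures.
From mathcomp Require Import all_boot all_order all_algebra.
Set Implicit Arguments. Unset Strict Implicit. Unset Printing Implicit Defensive.
Import Order.TTheory GRing.Theory Num.Theory.

(* A directed graph on the finite node type V is given by its edge set
   E : {set V * V}; (x, y) \in E is the edge x -> y.  n = #|V|, m = #|E|. *)

Section Graphs.
Variable V : finType.

Definition edge_rel (E B : {set V * V}) : rel V :=
  fun x y => ((x, y) \in E) && ((x, y) \notin B).

Fixpoint walk_le (r : rel V) (k : nat) (x y : V) : bool :=
  if k is k'.+1 then (x == y) || [exists z, r x z && walk_le r k' z y]
  else x == y.

(* Shortest-path distance (number of edges) from x to y; None = +infinity.
   A shortest walk is a simple path, so it has fewer than #|V| edges. *)
Definition dist (r : rel V) (x y : V) : option nat :=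
  ohead [seq k <- iota 0 #|V| | walk_le r k x y].

Definition shortest_path (r : rel V) (x y : V) (p : seq V) : bool :=
  [&& path r x p, last x p == y & dist r x y == Some (size p)].

Definition path_edges (x : V) (p : seq V) : seq (V * V) := zip (x :: p) p.

Definition max_attack_len (E : {set V * V}) (DA : V) (l : nat) : Prop :=
  (exists x p, [/\ path (edge_rel E set0) x p, uniq (x :: p),
                   last x p = DA & size p = l]) /\
  (forall x p, path (edge_rel E set0) x p -> uniq (x :: p) -> last x p = DA ->
               size p <= l).

(* Cost model: every call that runs a breadth-first search (the b = 0 leaves,
   and every branching call, which computes dist(s1) and a shortest path p
   by BFS, then iterates over the edges of p) costs n + m + 1 elementary
   steps; a call returning 0 because no entry nodes remain costs 1.
   The "arbitrary" choices are made by the strategies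
     pickE B S     : index (mod |S|) of the chosen entry node s1 in S,
     pickP B S s1  : the chosen shortest path from s1 to DA in G - B,
   which may depend on the whole current state (B = blocked edges,
   S = remaining entry nodes).  s = original number of entry nodes.
   The argument k is fuel, always equal to b + size S (each recursive call
   decreases b + size S by exactly one), so the k = 0 branch is never hit
   when called from budget_fpt_run. *)
Section Algo.
Variables (R : realFieldType) (E Eb : {set V * V}) (DA : V) (s : nat)
  (f : nat -> R) (pickE : {set V * V} -> seq V -> nat)
  (pickP : {set V * V} -> seq V -> V -> seq V).

Definition fval (d : option nat) : R := if d is Some k then f k else 0%R.

Definition call_cost : nat := #|V| + #|E| + 1.

Fixpoint budget_fpt (k b : nat) (S : seq V) (B : {set V * V}) : R * nat :=
  let r := edge_rel E B in
  if b == 0 then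
    ((\sum_(x <- S) fval (dist r x DA)) / s%:R, call_cost)%R
  else match S with
  | [::] => (0%R, 1)
  | _ :: _ =>
    match k with
    | 0 => (0%R, 0)
    | k'.+1 =>
      let i := pickE B S %% size S in
      let s1 := nth DA S i in
      let S' := take i S ++ drop i.+1 S in
      let d := dist r s1 DA in
      let p := if d is Some _ then pickP B S s1 else [::] in
      let r0 := budget_fpt k' b S' B in
      let rs := [seq budget_fpt k' b.-1 S (e |: B)
                | e <- path_edges s1 p & e \in Eb] in
      (foldr (fun x m => Num.min x.1 m) (r0.1 + fval d / s%:R)%R rs,
       call_cost + r0.2 + sumn (map snd rs))
    end
  end.

End Algo.

Definition budget_fpt_run (R : realFieldType) (E Eb : {set V * V}) (DA : V)
  (f : nat -> R) (pickE : {set V * V} -> seq V -> nat)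
  (pickP : {set V * V} -> seq V -> V -> seq V) (b : nat) (entries : seq V)
  : R * nat :=
  budget_fpt E Eb DA (size entries) f pickE pickP (b + size entries) b entries set0.

End Graphs.

(* Main.v *)
Require Import Defs.
From HB Require Import structures.
From mathcomp Require Import all_boot all_order all_algebra.
From mathcomp Require Import zify.
Import Order.TTheory GRing.Theory Num.Theory.
Set Implicit Arguments. Unset Strict Implicit.

Section G.
Variable V : finType.

Lemma walk_path (r : rel V) x q k : path r x q -> size q <= k -> walk_le r k x (last x q).
Proof.
elim: q x k => [|z q IH] x [|k] //=; rewrite ?eqxx //.
move=> /andP[rxz pq] hs; apply/orP; right; apply/existsP; exists z.
  by rewrite rxz IH.
Qed.

Lemma ohead_filter_iota (P : pred nat) m n d :
  ohead [seq k <- iota m n | P k] = Some d -> forall k, m <= k < d -> ~~ P k.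
Proof.
elim: n m => [|n IH] m //=.
case Pm: (P m) => /=.
- by move=> [<-] k /andP[h1 h2]; exfalso; lia.
- move=> H k /andP[h1 h2].
  have [->|ne] := eqVneq k m; first by rewrite Pm.
  apply: (IH m.+1 H); apply/andP; split => //; lia.
Qed.

Lemma dist_min (r : rel V) x y d k : dist r x y = Some d -> k < d -> ~~ walk_le r k x y.
Proof.
move=> H kd; exact: (@ohead_filter_iota (fun k => walk_le r k x y) 0 #|V| d H k kd).
Qed.

Lemma dist_NoneE (r : rel V) x y :
  (dist r x y == None) = ~~ has (fun k => walk_le r k x y) (iota 0 #|V|).
Proof.
by rewrite /dist has_filter negbK; case: [seq _ <- _ | _].
Qed.

Lemma walk_mono (r r' : rel V) : subrel r' r -> forall k x y, walk_le r' k x y -> walk_le r k x y.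
Proof.
move=> sub; elim=> [|k IH] x y //=.
case/orP=> [->//|/existsP[z /andP[h1 h2]]].
apply/orP; right; apply/existsP; exists z; by rewrite (sub _ _ h1) IH.
Qed.

Lemma dist_None_mono (r r' : rel V) x y : subrel r' r ->
  dist r x y = None -> dist r' x y = None.
Proof.
move=> sub /eqP; rewrite !dist_NoneE => H; apply/eqP; rewrite dist_NoneE.
apply: contra H; apply: sub_has => k; exact: walk_mono.
Qed.

Lemma edge_rel_sub (E B B' : {set V * V}) : B \subset B' -> subrel (edge_rel E B') (edge_rel E B).
Proof.
move=> sBB' x y /andP[h1 h2]; rewrite /edge_rel h1 /=.
by apply: contra h2 => h; apply: (subsetP sBB').
Qed.

End G.
Lemma sumn_bound (T : eqType) (g : T -> nat) (s : seq T) M c :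
  (forall x, x \in s -> g x + c <= M) -> sumn (map g s) + size s * c <= size s * M.
Proof.
elim: s => [|x s IH] //= H.
have h1 := H x (mem_head _ _).
have h2 : sumn (map g s) + size s * c <= size s * M.
  by apply: IH => y ys; apply: H; rewrite in_cons ys orbT.
rewrite !mulSn; lia.
Qed.

Section A.
Variables (V : finType) (R : realFieldType) (E Eb : {set V * V}) (DA : V) (s : nat)
  (f : nat -> R) (pickE : {set V * V} -> seq V -> nat)
  (pickP : {set V * V} -> seq V -> V -> seq V) (l : nat).
Hypothesis maxl : forall x p, path (edge_rel E set0) x p -> uniq (x :: p) -> last x p = DA -> size p <= l.
Hypothesis hpick : forall (B : {set V * V}) (S : seq V) (x : V) (d : nat),
        dist (edge_rel E B) x DA = Some d ->
        shortest_path (edge_rel E B) x DA (pickP B S x).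
Hypothesis l1 : 1 <= l.

Lemma size_le_l B x p : path (edge_rel E B) x p -> last x p = DA ->
  dist (edge_rel E B) x DA = Some (size p) -> size p <= l.
Proof.
move=> pp lp dp.
move: lp; case: (shortenP pp) => q pq uq _ lq.
have sq : size q <= l.
  apply: maxl uq lq; apply: sub_path pq; apply: edge_rel_sub; exact: sub0set.
have w := walk_path pq (leqnn _); rewrite lq in w.
rewrite leqNgt; apply/negP => lt.
have := dist_min dp (leq_ltn_trans sq lt); by rewrite w.
Qed.

Lemma dead_after B (S : seq V) s1 p e : l = 1 ->
  dist (edge_rel E B) s1 DA = Some (size p) -> path (edge_rel E B) s1 p -> last s1 p = DA ->
  e \in path_edges s1 p -> dist (edge_rel E (e |: B)) s1 DA = None.
Proof.
move=> hl dp pp lp ep.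
have sp := size_le_l pp lp dp; rewrite hl in sp.
case: p sp dp pp lp ep => [|y [|z p]] //= _ dp pp lp; rewrite lp inE => /eqP ee.
case H: (dist _ _ _) => [d'|] //.
have /and3P[pq /eqP lq _] := hpick S H.
move: lq; case: (shortenP pq) => q' pq' uq' _ lq'.
have : size q' <= 1.
  rewrite -hl; apply: maxl uq' lq'; apply: sub_path pq'; apply: edge_rel_sub; exact: sub0set.
case: q' pq' uq' lq' => [|z [|w q']] //= pq' _ lq' _.
- have := dist_min dp (ltn0Sn 0); by rewrite /= lq' eqxx.
- move: pq'; rewrite andbT /edge_rel lq' ee setU11 andbF //.
Qed.


Let a := call_cost E.
Let D := a.+1.
Let K := 3 * a + 3.
Definition dead B x := dist (edge_rel E B) x DA == None.

Lemma Kpos L X : 0 < L -> 0 < X -> K <= K * L * X.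
Proof. by move=> hL hX; rewrite -mulnA leq_pmulr // muln_gt0 hL hX. Qed.

Lemma main k b S B : 0 < size S ->
  (budget_fpt E Eb DA s f pickE pickP k b S B).2 + D + D * has (dead B) S
   <= K * l ^ b * 'C(b + size S - 1, b).
Proof.
have lb : forall b, 0 < l ^ b by move=> b'; rewrite expn_gt0 l1.
elim: k b S B => [|k IH] [|b] S B hS /=.
- rewrite expn0 bin0 muln1 /K /D; case: (has _ _); rewrite /=; lia.
- case: S hS => [//|x S0] _ /=.
  apply: leq_trans (Kpos (lb _) _); last by rewrite bin_gt0; lia.
  rewrite /K /D; case: (has _ _); rewrite /=; lia.
- rewrite expn0 bin0 muln1 /K /D; case: (has _ _); rewrite /=; lia.
case: S hS => [//|x S0] _.
set S := x :: S0.
have hS : 0 < size S by [].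
clearbody S.
set i := pickE B S %% size S.
set s1 := nth DA S i.
set S' := take i S ++ drop i.+1 S.
have iS : i < size S by rewrite /i ltn_mod.
have eS : S = take i S ++ s1 :: drop i.+1 S by rewrite -drop_nth // cat_take_drop.
have sS' : size S' = (size S).-1.
  rewrite /S' size_cat size_take size_drop iS; lia.
have hd : has (dead B) S = dead B s1 || has (dead B) S'.
  by rewrite {1}eS /S' !has_cat /= orbCA.
have s1S : s1 \in S by rewrite /s1 mem_nth.
rewrite -map_comp /= hd -/a.
have hC : K * l ^ b.+1 * 'C(b.+1 + size S - 1, b.+1) =
   K * l ^ b.+1 * 'C(b.+1 + size S' - 1, b.+1) + l * (K * l^b * 'C(b + size S - 1, b)).
  rewrite sS'.
  have -> : b.+1 + size S - 1 = (b + (size S).-1).+1 by lia.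
  have -> : b.+1 + (size S).-1 - 1 = b + (size S).-1 by lia.
  have -> : b + size S - 1 = b + (size S).-1 by lia.
  rewrite binS expnS; lia.
rewrite hC.
have M2K : K <= K * l ^ b * 'C(b + size S - 1, b).
  by apply: Kpos => //; rewrite bin_gt0; lia.
have hT' : (budget_fpt E Eb DA s f pickE pickP k b.+1 S' B).2 + D + D * has (dead B) S'
     <= K * l ^ b.+1 * 'C(b.+1 + size S' - 1, b.+1) \/
   (S' = [::] /\ (budget_fpt E Eb DA s f pickE pickP k b.+1 S' B).2 = 1).
  have [S'0|S'n] := eqVneq S' [::].
    by right; split => //; rewrite S'0; case: (k).
  left; apply: IH; by case: (S') S'n.
set M2 := K * l ^ b * 'C(b + size S - 1, b) in M2K *.
set M1 := K * l ^ b.+1 * 'C(b.+1 + size S' - 1, b.+1) in hT' *.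
set T' := (budget_fpt E Eb DA s f pickE pickP k b.+1 S' B).2 in hT' *.
have lM2 : M2 <= l * M2 by rewrite leq_pmull.
case dS: (dist (edge_rel E B) s1 DA) => [d0|]; last first.
  rewrite /dead dS eqxx /=.
  case: hT' => [hT'|[S'0 ->]].
    case: (has _ S') hT' => /=; lia.
  rewrite /M1 S'0 /= bin_small; lia.
have -> : dead B s1 = false by rewrite /dead dS.
rewrite /=.
set p := pickP B S s1.
have /and3P[pp /eqP lp /eqP dp] := hpick S dS.
rewrite -/p in pp lp dp.
have sp := size_le_l pp lp dp.
set fl := [seq e <- path_edges s1 p | e \in Eb].
have hj : size fl <= l.
  apply: leq_trans sp; rewrite size_filter (leq_trans (count_size _ _)) //.
  by rewrite /path_edges size_zip /=; lia.
have hsum := @sumn_bound _ (snd \o (fun e : V * V =>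
             budget_fpt E Eb DA s f pickE pickP k b S (e |: B))) fl M2 (D + D * (l == 1)).
have H : forall e, e \in fl ->
    (snd \o (fun e : V * V => budget_fpt E Eb DA s f pickE pickP k b S (e |: B))) e
      + (D + D * (l == 1)) <= M2.
  move=> e; rewrite mem_filter => /andP[_ ep] /=.
  have := IH b S (e |: B) hS; rewrite -/M2.
  case hl: (l == 1); last first.
    by rewrite /= muln0 addn0 => h; exact: leq_trans (leq_addr _ _) h.
  have -> : has (dead (e |: B)) S.
    apply/hasP; exists s1 => //.
    by rewrite /dead (dead_after S (eqP hl) dp pp lp ep).
  by rewrite /= !muln1 addnA.
have {}hsum := hsum H.
set P := sumn _ in hsum *.
set j := size fl in hj hsum.
have f1 : j < l -> j.+1 * M2 <= l * M2 by move=> h; exact: leq_mul h (leqnn _).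
have f2 : D <= l * D by rewrite leq_pmull.
have f3 : 2 <= l -> 2 * D <= l * D by move=> h; exact: leq_mul h (leqnn _).
have eK : K = 3 * a + 3 by [].
have eD : D = a.+1 by [].
have M1z : S' = [::] -> M1 = 0.
  move=> h; rewrite /M1 h /= addn0 subn1 /= bin_small ?muln0 //.
clearbody M1 M2 T' P j.
have [jl|jl] : j < l \/ j = l by lia.
  have {}f1 := f1 jl.
  have hP : P <= j * M2 by apply: leq_trans hsum; exact: leq_addr.
  case: hT' => [hT'|[S'0 ->]].
    move: hT'; case: (has _ S') => /=; rewrite ?muln1 ?muln0; lia.
  rewrite (M1z S'0).
  rewrite S'0 /= muln0; lia.
subst j.
case hl: (l == 1) in hsum; rewrite /= ?muln1 ?muln0 ?addn0 in hsum.
  move/eqP: hl => hl; subst l.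
  case: hT' => [hT'|[S'0 ->]].
    move: hT'; case: (has _ S') => /=; rewrite ?muln1 ?muln0; lia.
  rewrite (M1z S'0).
  rewrite S'0 /= muln0; lia.
have l2 : 2 <= l by move/negbT: hl; lia.
have {}f3 := f3 l2.
case: hT' => [hT'|[S'0 ->]].
  move: hT'; case: (has _ S') => /=; rewrite ?muln1 ?muln0; lia.
rewrite (M1z S'0).
rewrite S'0 /= muln0; lia.
Qed.
End A.


Theorem proposition1 (R : realFieldType) (c : nat) :
  exists C : nat,
  forall (V : finType) (E Eb : {set V * V}) (DA : V) (entries : seq V)
    (b l : nat) (f : nat -> R)
    (pickE : {set V * V} -> seq V -> nat)
    (pickP : {set V * V} -> seq V -> V -> seq V),
    Eb \subset E ->
    uniq entries ->
    #|E| <= c * #|V| ->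
    (forall x y : nat, x <= y -> (f y <= f x)%R) ->
    (forall x : nat, (0 <= f x)%R) ->
    max_attack_len E DA l ->
    (forall (B : {set V * V}) (S : seq V) (x : V) (d : nat),
        dist (edge_rel E B) x DA = Some d ->
        shortest_path (edge_rel E B) x DA (pickP B S x)) ->
    1 <= l ->
    1 <= size entries ->
    (budget_fpt_run E Eb DA f pickE pickP b entries).2
      <= C * l ^ b * 'C(b + size entries - 1, b) * #|V|.
Proof.
exists (3 * c + 9) => V E Eb DA entries b l f pickE pickP _ _ hE _ _ [_ maxl] hpick l1 hS.
have h := @main V R E Eb DA (size entries) f pickE pickP l maxl hpick l1
  (b + size entries) b entries set0 hS.
rewrite /budget_fpt_run.
have hn : 0 < #|V| by apply/card_gt0P; exists DA.
have hK : 3 * call_cost E + 3 <= (3 * c + 9) * #|V| by rewrite /call_cost; nia.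
set T := (budget_fpt _ _ _ _ _ _ _ _ _ _ _).2 in h *.
set Q := l ^ b * 'C(b + size entries - 1, b) in h *.
have : (3 * call_cost E + 3) * Q <= (3 * c + 9) * #|V| * Q by exact: leq_mul hK (leqnn _).
rewrite /Q in h *; move: h; case: (has _ _) => /=; nia.
Qed.
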